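(* Let $L$ be a finite-dimensional pure, nonnilpotent, solvable Lie algebra over $\mathbb{C}$ of breadth $2$ such that $\dim[L,L]=2$ and $\dim L^k=2$ for all integers $k\geq 2$. Then $L$ has a basis such that one of the following holds (in each case the listed brackets are the only nonzero brackets of basis elements, up to antisymmetry): (1) basis $\{x_1,x_2,x_3,x_4,x_5\}$ with $[x_1,x_5]=x_4$, $[x_2,x_4]=x_4$, $[x_3,x_5]=x_5$; (2) $L=\mathrm{span}\{x_1,x_2\}\oplus\mathrm{span}\{x_3,x_4\}$ (direct sum of Lie algebras) with $[x_1,x_2]=x_2$, $[x_3,x_4]=x_4$; (3) basis $\{x_1,x_2,x_3,x_4\}$ with $[x_1,x_4]=x_3$, $[x_2,x_3]=x_3$, $[x_2,x_4]=x_4$; (4) basis $\{x_1,x_2,x_3\}$ with $[x_1,x_2]=x_2$, $[x_1,x_3]=x_2+x_3$; (5) basis $\{x_1,x_2,x_3\}$ with $[x_1,x_2]=x_2$, $[x_1,x_3]=\gamma x_3$ for some $\gamma\in\mathbb{C}\setminus\{0\}$.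
   Context: For $x\in L$, the breadth of $x$ is $b(x)=\mathrm{rank}(\mathrm{ad}_x)$, and $b(L)=\max\{b(x)\mid x\in L\}$. $L$ is pure if it has no abelian ideal as a direct summand; equivalently $Z(L)\subseteq[L,L]$, where $Z(L)$ is the center. The lower central series is indexed by $L^0=L$, $L^1=[L,L]$ and $L^k=[L,L^{k-1}]$ for $k\geq 2$. *)

(* Defs.v *)
From HB Require Import structures.
From mathcomp Require Import all_boot all_order all_algebra.
From mathcomp Require Import complex.
From mathcomp Require Import Rstruct.
From Stdlib Require Import Rdefinitions.
Set Implicit Arguments. Unset Strict Implicit. Unset Printing Implicit Defensive.
Import GRing.Theory.
Local Open Scope ring_scope.

Definition CC : numClosedFieldType := complex Rdefinitions.R.

(* A finite-dimensional Lie algebra over CC is modelled (up to isomorphism)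
   as the space 'rV[CC]_n together with a bracket br. *)
Definition is_lie_bracket (n : nat) (br : 'rV[CC]_n -> 'rV[CC]_n -> 'rV[CC]_n) : Prop :=
  [/\ (forall (a : CC) x y z, br (a *: x + y) z = a *: br x z + br y z),
      (forall (a : CC) x y z, br x (a *: y + z) = a *: br x y + br x z),
      (forall x, br x x = 0) &
      (forall x y z, br x (br y z) + br y (br z x) + br z (br x y) = 0)].

(* Bracket [U,V] of two subspaces (row spaces of square matrices). *)
Definition brmx n (br : 'rV[CC]_n -> 'rV[CC]_n -> 'rV[CC]_n) (U V : 'M[CC]_n) : 'M[CC]_n :=
  (\sum_(i < n) \sum_(j < n) <<br (row i U) (row j V)>>)%MS.

(* Lower central series: L^0 = L, L^1 = [L,L], L^k = [L, L^(k-1)]. *)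
Fixpoint lcs n (br : 'rV[CC]_n -> 'rV[CC]_n -> 'rV[CC]_n) (k : nat) : 'M[CC]_n :=
  match k with
  | 0 => 1%:M
  | k'.+1 => brmx br 1%:M (lcs (n:=n) br k')
  end.

Fixpoint dser n (br : 'rV[CC]_n -> 'rV[CC]_n -> 'rV[CC]_n) (k : nat) : 'M[CC]_n :=
  match k with
  | 0 => 1%:M
  | k'.+1 => brmx br (dser (n:=n) br k') (dser (n:=n) br k')
  end.

Definition lie_nilpotent n (br : 'rV[CC]_n -> 'rV[CC]_n -> 'rV[CC]_n) : Prop := exists k, lcs (n:=n) br k = 0.
Definition lie_solvable n (br : 'rV[CC]_n -> 'rV[CC]_n -> 'rV[CC]_n) : Prop := exists k, dser (n:=n) br k = 0.

Definition lie_ideal n (br : 'rV[CC]_n -> 'rV[CC]_n -> 'rV[CC]_n) (I : 'M[CC]_n) : Prop := (brmx br 1%:M I <= I)%MS.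

Definition lie_pure n (br : 'rV[CC]_n -> 'rV[CC]_n -> 'rV[CC]_n) : Prop :=
  ~ exists I J : 'M[CC]_n,
      [/\ lie_ideal br I, lie_ideal br J, I != 0, brmx br I I = 0 &
          (((I :&: J)%MS == 0 :> 'M[CC]_n) /\ (I + J == 1%:M)%MS)].

Definition ad_mx n (br : 'rV[CC]_n -> 'rV[CC]_n -> 'rV[CC]_n) (x : 'rV[CC]_n) : 'M[CC]_n :=
  \matrix_(i < n) br x (delta_mx 0 i).
Definition breadth_elt n (br : 'rV[CC]_n -> 'rV[CC]_n -> 'rV[CC]_n) (x : 'rV[CC]_n) : nat := \rank (ad_mx br x).
Definition has_breadth n (br : 'rV[CC]_n -> 'rV[CC]_n -> 'rV[CC]_n) (b : nat) : Prop :=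
  (forall x, leq (breadth_elt (n:=n) br x) b) /\ exists x, breadth_elt (n:=n) br x = b.

Definition is_basis n (xs : seq 'rV[CC]_n) : Prop :=
  size xs = n /\ \rank (\matrix_(i < size xs) nth 0 xs i) = n.

(* Main.v *)
Require Import Defs.
From mathcomp Require Import all_boot all_order all_algebra.
From mathcomp Require Import ring lra zify.
From Stdlib Require Import Classical.
Set Implicit Arguments. Unset Strict Implicit. Unset Printing Implicit Defensive.
Import GRing.Theory.
Local Open Scope ring_scope.

Lemma lin_eq (R : comRingType) (x y u v : R) : u = v -> x - y = u - v -> x = y.
Proof. by move=> -> /eqP; rewrite subrr subr_eq0 => /eqP. Qed.

Section LA.
Variable n : nat.
Implicit Types (x y z w p : 'rV[CC]_n).

Lemma span2 p z w : (p <= z + w)%MS -> exists a b, p = a *: z + b *: w.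
Proof.
case/sub_addsmxP => u ->; exists (u.1 0 0), (u.2 0 0).
by rewrite [u.1]mx11_scalar [u.2]mx11_scalar !mul_scalar_mx !mxE.
Qed.

Lemma uniq2 w z a b a' b' : w != 0 -> ~~ (z <= w)%MS ->
  a *: w + b *: z = a' *: w + b' *: z -> a = a' /\ b = b'.
Proof.
move=> w0 zw E.
have Eb : b = b'.
  have [/eqP|nz] := eqVneq (b - b') 0; first by rewrite subr_eq0 => /eqP.
  exfalso; move: zw; apply/negP/negPn.
  have H : (b - b') *: z = (a' - a) *: w.
    apply/rowP => i; have := congr1 (fun M : 'rV_n => M 0 i) E; rewrite !mxE => Ei.
    by apply: (lin_eq Ei); ring.
  have -> : z = (b - b')^-1 *: ((a' - a) *: w) by rewrite -H scalerA mulVf // scale1r.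
  by rewrite !scalemx_sub.
split=> //; move: E; rewrite Eb => /addIr /eqP; rewrite -subr_eq0 -scalerBl.
by rewrite scaler_eq0 (negbTE w0) orbF subr_eq0 => /eqP.
Qed.

Lemma rank_add1 m (A : 'M[CC]_(m, n)) y : ~~ (y <= A)%MS ->
  \rank (A + y)%MS = (\rank A).+1.
Proof.
move=> yA; have y0 : y != 0 by apply: contraNneq yA => ->; rewrite sub0mx.
have := mxrank_sum_cap A y; rewrite rank_rV y0.
have -> : \rank (A :&: y)%MS = 0%N.
  apply/eqP; rewrite mxrank_eq0; apply/eqP.
  have : (\rank (A :&: y)%MS <= \rank y)%N by rewrite mxrankS ?capmxSr.
  rewrite rank_rV y0 leq_eqVlt ltnS leqn0 mxrank_eq0 => /orP [|/eqP //] /eqP r1.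
  case/negP: yA; have [_ E] := mxrank_leqif_sup (capmxSr A y).
  have : (y <= A :&: y)%MS by rewrite -E r1 rank_rV y0.
  by move/submx_trans; apply; exact: capmxSl.
by rewrite addn0 addn1.
Qed.

Lemma basis2 (Vm : 'M[CC]_n) z w : \rank Vm = 2%N -> (z <= Vm)%MS -> (w <= Vm)%MS ->
  w != 0 -> ~~ (z <= w)%MS -> (Vm <= w + z)%MS.
Proof.
move=> r2 zV wV w0 zw.
have sub : (w + z <= Vm)%MS by rewrite addsmx_sub wV zV.
have [_ <-] := mxrank_leqif_sup sub.
by rewrite r2 rank_add1 // rank_rV w0.
Qed.

Lemma exists_notin m1 m2 (A : 'M[CC]_(m1, n)) (B : 'M[CC]_(m2, n)) :
  (\rank A < \rank B)%N -> exists v : 'rV_n, (v <= B)%MS && ~~ (v <= A)%MS.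
Proof.
move=> lt; have : ~~ (B <= A)%MS.
  by apply/negP => /mxrankS; rewrite leqNgt lt.
by case/row_subPn => i Hi; exists (row i B); rewrite row_sub.
Qed.

Lemma lin_sub m (A : 'M[CC]_(m, n)) a b x y : (x <= A)%MS -> (y <= A)%MS ->
  ((a *: x + b *: y)%R <= A)%MS.
Proof. by move=> xA yA; apply: addmx_sub; apply: scalemx_sub. Qed.

End LA.
Lemma mk_basis n (s : seq 'rV[CC]_n) : size s = n ->
  (1%:M <= \matrix_(i < size s) nth 0 s i)%MS -> is_basis s.
Proof. by move=> sz; rewrite sub1mx => /eqP H; split. Qed.

Lemma memM n (s : seq 'rV[CC]_n) x : x \in s -> (x <= \matrix_(i < size s) nth 0 s i)%MS.
Proof.
move=> xs; have lt : (index x s < size s)%N by rewrite index_mem.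
have := row_sub (Ordinal lt) (\matrix_(i < size s) nth 0 s i).
by rewrite rowK (nth_index _ xs).
Qed.

Lemma scal_subK n m (M : 'M[CC]_(m, n)) (x : 'rV_n) c : c != 0 -> (c *: x <= M)%MS -> (x <= M)%MS.
Proof. by move=> c0 /(scalemx_sub c^-1); rewrite scalerA mulVf // scale1r. Qed.

Lemma sub_eq n m (M : 'M[CC]_(m, n)) (x y : 'rV_n) : x = y -> (y <= M)%MS -> (x <= M)%MS.
Proof. by move=> ->. Qed.

Section Lie.
Variable n : nat.
Variable br : 'rV[CC]_n -> 'rV[CC]_n -> 'rV[CC]_n.
Hypothesis Hbr : is_lie_bracket br.

Lemma brDl x y z : br (x + y) z = br x z + br y z.
Proof. by case: Hbr => H _ _ _; have := H 1 x y z; rewrite !scale1r. Qed.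
Lemma brDr x y z : br x (y + z) = br x y + br x z.
Proof. by case: Hbr => _ H _ _; have := H 1 x y z; rewrite !scale1r. Qed.
Lemma br0l z : br 0 z = 0.
Proof. by apply: (addrI (br 0 z)); rewrite -brDl !addr0. Qed.
Lemma br0r z : br z 0 = 0.
Proof. by apply: (addrI (br z 0)); rewrite -brDr !addr0. Qed.
Lemma brZl a x y : br (a *: x) y = a *: br x y.
Proof. by case: Hbr => H _ _ _; have := H a x 0 y; rewrite !addr0 br0l addr0. Qed.
Lemma brZr a x y : br x (a *: y) = a *: br x y.
Proof. by case: Hbr => _ H _ _; have := H a x y 0; rewrite !addr0 br0r addr0. Qed.
Lemma brxx x : br x x = 0.
Proof. by case: Hbr. Qed.
Lemma brC x y : br x y = - br y x.
Proof.
apply/eqP; rewrite -subr_eq0 opprK; apply/eqP.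
have := brxx (x + y); rewrite !brDl !brDr !brxx add0r addr0.
by rewrite addrC.
Qed.
Lemma brNl x y : br (- x) y = - br x y.
Proof. by rewrite -scaleN1r brZl scaleN1r. Qed.
Lemma brNr x y : br x (- y) = - br x y.
Proof. by rewrite -scaleN1r brZr scaleN1r. Qed.
Lemma brBl x y z : br (x - y) z = br x z - br y z.
Proof. by rewrite brDl brNl. Qed.
Lemma brBr x y z : br x (y - z) = br x y - br x z.
Proof. by rewrite brDr brNr. Qed.
Lemma jacobi x y z : br x (br y z) = br (br x y) z + br y (br x z).
Proof.
case: Hbr => _ _ _ J; have := J x y z.
rewrite (brC z (br x y)) (brC z x) brNr => H.
by rewrite -[LHS]subr0 -H !opprD !opprK !addrA addrN add0r addrC.
Qed.

Lemma br_sumr x I r (P : pred I) (F : I -> 'rV_n) :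
  br x (\sum_(i <- r | P i) F i) = \sum_(i <- r | P i) br x (F i).
Proof. exact: (big_morph (br x) (brDr x) (br0r x)). Qed.
Lemma br_suml y I r (P : pred I) (F : I -> 'rV_n) :
  br (\sum_(i <- r | P i) F i) y = \sum_(i <- r | P i) br (F i) y.
Proof. exact: (big_morph (br^~ y) (fun a b => brDl a b y) (br0l y)). Qed.

Lemma brmx_subP m (U U' : 'M_n) (S : 'M_(m, n)) :
  (forall i j, (br (row i U) (row j U') <= S)%MS) -> (brmx br U U' <= S)%MS.
Proof.
move=> H; apply/sumsmx_subP => i _; apply/sumsmx_subP => j _.
by rewrite genmxE.
Qed.

Lemma br_sub_brmx (U U' : 'M_n) x y :
  (x <= U)%MS -> (y <= U')%MS -> (br x y <= brmx br U U')%MS.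
Proof.
move=> /mulmxKpV <- /mulmxKpV <-.
rewrite !mulmx_sum_row br_suml; apply: summx_sub => i _.
rewrite br_sumr; apply: summx_sub => j _.
rewrite brZl brZr; apply: scalemx_sub; apply: scalemx_sub.
apply: (sumsmx_sup i) => //; apply: (sumsmx_sup j) => //.
by rewrite genmxE.
Qed.

Definition V := lcs br 1.

Lemma brV x y : (br x y <= V)%MS.
Proof. by apply: br_sub_brmx; rewrite submx1. Qed.

Lemma Wsub m (S : 'M_(m, n)) : (forall x v, (v <= V)%MS -> (br x v <= S)%MS) ->
  (lcs br 2 <= S)%MS.
Proof. by move=> H; apply: brmx_subP => i j; apply: H; rewrite row_sub. Qed.

Lemma lcs2V : (lcs br 2 <= V)%MS.
Proof. by apply: Wsub => x v _; apply: brV. Qed.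

Hypothesis HV2 : \rank V = 2%N.
Hypothesis HW2 : \rank (lcs br 2) = 2%N.

Lemma Wrank m (S : 'M_(m, n)) : (forall x v, (v <= V)%MS -> (br x v <= S)%MS) ->
  (2 <= \rank S)%N.
Proof. by move=> /Wsub /mxrankS; rewrite HW2. Qed.

Lemma Wline (w : 'rV_n) : ~ (forall x v, (v <= V)%MS -> (br x v <= w)%MS).
Proof. by move/Wrank; rewrite rank_rV; case: (w != 0). Qed.

Lemma basisV : exists u1 u2 : 'rV_n, [/\ (u1 <= V)%MS, (u2 <= V)%MS, u1 != 0,
   ~~ (u2 <= u1)%MS & (V <= u1 + u2)%MS].
Proof.
have [u1 /andP [u1V u10]] : exists v : 'rV_n, (v <= V)%MS && ~~ (v <= (0 : 'rV_n))%MS.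
  by apply: exists_notin; rewrite mxrank0 HV2.
have [u2 /andP [u2V u21]] : exists v : 'rV_n, (v <= V)%MS && ~~ (v <= u1)%MS.
  by apply: exists_notin; rewrite HV2 rank_rV; case: (u1 != 0).
have u1n0 : u1 != 0 by apply: contraNneq u10 => ->; rewrite sub0mx.
by exists u1, u2; split => //; apply: basis2.
Qed.

Lemma bilin2 w z p q : (p <= w + z)%MS -> (q <= w + z)%MS ->
  exists c, br p q = c *: br w z.
Proof.
case/span2 => a [b ->]; case/span2 => a' [b' ->].
exists (a * b' - b * a').
rewrite !brDl !brDr !brZl !brZr !brxx (brC z w).
by apply/rowP => i; rewrite !mxE; ring.
Qed.

Lemma abelV : forall v w, (v <= V)%MS -> (w <= V)%MS -> br v w = 0.
Proof.
have [u1 [u2 [u1V u2V u10 u21 Vu]]] := basisV.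
suff w00 : br u1 u2 = 0.
  move=> v w vV wV; have [c ->] := bilin2 (submx_trans vV Vu) (submx_trans wV Vu).
  by rewrite w00 scaler0.
apply/eqP; apply/negPn/negP => w0n.
set w0 := br u1 u2 in w0n.
have w0V : (w0 <= V)%MS by apply: brV.
have VV : forall p q, (p <= V)%MS -> (q <= V)%MS -> exists c, br p q = c *: w0.
  by move=> p q pV qV; apply: bilin2; apply: submx_trans Vu.
have Cl : forall v, (v <= V)%MS -> br v w0 = 0 -> (v <= w0)%MS.
  move=> v vV H; apply/negPn/negP => vw.
  have Vw : (V <= w0 + v)%MS by apply: basis2.
  have [c Hc] := bilin2 (submx_trans u1V Vw) (submx_trans u2V Vw).
  by move: w0n; rewrite /w0 Hc brC H oppr0 scaler0 eqxx.
apply: (@Wline w0) => x v vV.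
have [s Hs] : exists s, br x w0 = s *: w0.
  have [c1 H1] := VV _ _ (brV x u1) u2V.
  have [c2 H2] := VV _ _ u1V (brV x u2).
  by exists (c1 + c2); rewrite /w0 jacobi H1 H2 scalerDl.
have [mu Hmu] := VV _ _ vV w0V.
apply: Cl; first exact: brV.
have := jacobi x v w0; rewrite Hmu brZr Hs brZr Hmu => H.
apply: (addIr (s *: (mu *: w0))); rewrite -H add0r.
by rewrite !scalerA mulrC.
Qed.

Lemma commV x y v : (v <= V)%MS -> br x (br y v) = br y (br x v).
Proof. by move=> vV; rewrite jacobi (abelV (brV x y) vV) add0r. Qed.

Definition adm (y : 'rV_n) : 'M[CC]_n := \matrix_(i < n) br y (delta_mx 0 i).

Lemma admE y u : u *m adm y = br y u.
Proof.
rewrite mulmx_sum_row [in RHS](row_sum_delta u) br_sumr.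
by apply: eq_bigr => i _; rewrite rowK brZr.
Qed.

Lemma eigen y : exists e mu, [/\ (e <= V)%MS, e != 0 & br y e = mu *: e].
Proof.
set B := row_base V; set A := adm y.
have BV : (B :=: V)%MS by apply: eq_row_base.
have stab : (B *m A <= B)%MS.
  rewrite BV; apply/row_subP => i; rewrite row_mul admE; exact: brV.
have [mu] := @eigenvalue_closed CC _ (B *m A *m pinvmx B) (ltac:(by rewrite HV2)).
case/eigenvalueP => v0 Hv0 v00.
exists (v0 *m B), mu; split.
- by rewrite -BV submxMl.
- by rewrite mulmx_free_eq0 // row_base_free.
rewrite -admE -mulmxA -(mulmxKpV stab) mulmxA Hv0.
by rewrite -scalemxAl.
Qed.

Definition scal y := exists a, forall v, (v <= V)%MS -> br y v = a *: v.

Lemma lin_ext y (e f : 'rV_n) a : (V <= e + f)%MS -> br y e = a *: e -> br y f = a *: f ->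
  forall v, (v <= V)%MS -> br y v = a *: v.
Proof.
move=> Vef He Hf v /submx_trans /(_ Vef) /span2 [c [d ->]].
rewrite brDr !brZr He Hf.
by apply/rowP => i; rewrite !mxE; ring.
Qed.

Lemma common_eigen : exists e1, [/\ (e1 <= V)%MS, e1 != 0 &
  forall x, (br x e1 <= e1)%MS].
Proof.
case: (classic (exists x0, ~ scal x0)) => [[x0 nsc]|allsc].
  have [e [mu [eV e0 He]]] := eigen x0.
  exists e; split => // x; apply/negPn/negP => fe.
  apply: nsc; exists mu; apply: (@lin_ext x0 e (br x e) mu) => //.
    by apply: basis2 => //; apply: brV.
  by rewrite commV // He brZr.
have [e [mu [eV e0 He]]] := eigen 0.
exists e; split => // x.
have [a Ha] : scal x by apply: NNPP => H; apply: allsc; exists x.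
by rewrite Ha // scalemx_sub.
Qed.

Section Frame.
Variables e1 z : 'rV[CC]_n.
Hypothesis e1V : (e1 <= V)%MS.
Hypothesis e10 : e1 != 0.
Hypothesis He1 : forall x, (br x e1 <= e1)%MS.
Hypothesis zV : (z <= V)%MS.
Hypothesis ze1 : ~~ (z <= e1)%MS.
Hypothesis Vez : (V <= e1 + z)%MS.

Lemma coV v : (v <= V)%MS -> exists c d, v = c *: e1 + d *: z.
Proof. by move=> vV; apply: span2; apply: submx_trans Vez. Qed.

Lemma uniqV c d c' d' : c *: e1 + d *: z = c' *: e1 + d' *: z -> c = c' /\ d = d'.
Proof. exact: uniq2. Qed.

Lemma eig1 x : exists l, br x e1 = l *: e1.
Proof. by apply/sub_rVP. Qed.

Lemma exists_a : exists a, br a e1 != 0.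
Proof.
apply: NNPP => H.
have H0 : forall x, br x e1 = 0.
  by move=> x; apply/eqP; apply: NNPP => nz; apply: H; exists x; apply/negP.
case: (classic (exists x', br x' z != 0)) => [[x' nz]|H1]; last first.
  apply: (@Wline 0) => x v /coV [c [d ->]].
  have -> : br x (c *: e1 + d *: z) = 0; last by rewrite sub0mx.
  rewrite brDr !brZr H0.
  have -> : br x z = 0 by apply/eqP; apply: NNPP => nz; apply: H1; exists x; apply/negP.
  by rewrite !scaler0 addr0.
apply: (@Wline (br x' z)) => x v /coV [c [d ->]].
rewrite brDr !brZr H0 scaler0 add0r; apply: scalemx_sub.
have [p [q Hx]] := coV (brV x z).
have [p' [q' Hx']] := coV (brV x' z).
have E1 : br x (br x' z) = (q' * p) *: e1 + (q' * q) *: z.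
  rewrite Hx' brDr !brZr H0 Hx.
  by apply/rowP => i; rewrite !mxE; ring.
have E2 : br x' (br x z) = (q * p') *: e1 + (q * q') *: z.
  rewrite Hx brDr !brZr H0 Hx'.
  by apply/rowP => i; rewrite !mxE; ring.
have [E _] := uniqV (etrans (esym E1) (etrans (commV x x' zV) E2)).
have [q'0|q'n0] := eqVneq q' 0.
  have p'n0 : p' != 0 by apply: contraNneq nz => p'0; rewrite Hx' p'0 q'0 !scale0r addr0.
  have q0 : q = 0 by move: E; rewrite q'0 mul0r => /esym/eqP; rewrite mulf_eq0 (negbTE p'n0) orbF => /eqP.
  apply/sub_rVP; exists (p / p'); rewrite Hx Hx' q0 q'0.
  by apply/rowP => i; rewrite !mxE; field.
apply/sub_rVP; exists (q / q'); rewrite Hx Hx'.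
have Hp : p = q * p' / q' by rewrite -E [q' * p]mulrC mulfK.
by rewrite Hp; apply/rowP => i; rewrite !mxE; field.
Qed.

Lemma exists_b : exists b, ~~ (br b z <= e1)%MS.
Proof.
apply: NNPP => H.
have H0 : forall x, (br x z <= e1)%MS.
  by move=> x; apply: NNPP => nz; apply: H; exists x; apply/negP.
apply: (@Wline e1) => x v /coV [c [d ->]].
by rewrite brDr !brZr; apply: lin_sub.
Qed.

Lemma exists_y0 : exists y0, br y0 e1 != 0 /\ ~~ (br y0 z <= e1)%MS.
Proof.
have [a Ha] := exists_a; have [b Hb] := exists_b.
case: (boolP (br a z <= e1)%MS) => Haz; last by exists a.
have [Hbe|Hbe] := eqVneq (br b e1) 0; last by exists b.
exists (a + b); rewrite !brDl Hbe addr0; split => //.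
apply/negP => H; move/negP: Hb; apply.
have -> : br b z = 1 *: (br a z + br b z) + (-1) *: br a z.
  by rewrite scale1r scaleN1r addrC addKr.
exact: lin_sub.
Qed.

Section Y0.
Variable y0 : 'rV[CC]_n.
Hypothesis y0e : br y0 e1 != 0.
Hypothesis y0z : ~~ (br y0 z <= e1)%MS.

Lemma inj0 v : (v <= V)%MS -> br y0 v = 0 -> v = 0.
Proof.
case/coV => c [d ->]; have [l Hl] := eig1 y0.
have l0 : l != 0 by apply: contraNneq y0e => l0; rewrite Hl l0 scale0r.
rewrite brDr !brZr Hl => H.
have [d0|dn0] := eqVneq d 0.
  move: H; rewrite d0 scale0r addr0 scale0r addr0 scalerA => /eqP.
  rewrite scaler_eq0 (negbTE e10) orbF mulf_eq0 (negbTE l0) orbF => /eqP ->.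
  by rewrite scale0r.
case/negP: y0z.
have -> : br y0 z = (- (c * l / d)) *: e1.
  apply/rowP => i; have := congr1 (fun M : 'rV_n => M 0 i) H; rewrite !mxE => Hi.
  by apply: (mulfI dn0); apply: (lin_eq Hi); field.
by rewrite scalemx_sub.
Qed.

Lemma surj0 w : (w <= V)%MS -> exists v, (v <= V)%MS /\ br y0 v = w.
Proof.
move=> wV.
have nl : ~~ (br y0 z <= br y0 e1)%MS.
  apply/negP => /sub_rVP [c Hc]; case/negP: ze1.
  have : z - c *: e1 = 0.
    apply: inj0; first by rewrite -[z]scale1r -scaleNr; apply: lin_sub.
    by rewrite brBr brZr Hc subrr.
  by move/eqP; rewrite subr_eq0 => /eqP ->; rewrite scalemx_sub.
have := basis2 HV2 (brV y0 z) (brV y0 e1) y0e nl.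
move/(submx_trans wV)/span2 => [a [b ->]].
exists (a *: e1 + b *: z); split; first exact: lin_sub.
by rewrite brDr !brZr.
Qed.

Lemma central_of k : ~~ (k <= V)%MS -> (forall v, (v <= V)%MS -> br k v = 0) ->
  exists z0, ~~ (z0 <= V)%MS /\ forall y, br z0 y = 0.
Proof.
move=> kV Hk.
have [v [vV Hv]] := surj0 (brV y0 k).
exists (k - v); split.
  apply: contra kV => H; have -> : k = 1 *: (k - v) + 1 *: v by rewrite !scale1r subrK.
  exact: lin_sub.
move=> y; apply: inj0; first exact: brV.
rewrite jacobi.
have -> : br y0 (k - v) = 0 by rewrite brBr Hv subrr.
rewrite br0l add0r brBl Hk ?brV // abelV ?brV // subrr.
by [].
Qed.

End Y0.
End Frame.

Lemma not_pure z0 : ~~ (z0 <= V)%MS -> (forall y, br z0 y = 0) -> ~ lie_pure br.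
Proof.
move=> z0V Hz P; apply: P.
set I := <<z0>>%MS; set A := (V + z0)%MS; set J := (V + A^C)%MS.
have rowI : forall j, exists c, row j I = c *: z0.
  by move=> j; apply/sub_rVP; apply: submx_trans (row_sub j I) _; rewrite genmxE.
have z0I : (z0 <= I)%MS by rewrite genmxE.
have rA : \rank A = 3%N by rewrite /A rank_add1 // HV2.
have n3 : (3 <= n)%N by rewrite -rA rank_leq_col.
have VJ : (V <= J)%MS by apply: addsmxSl.
have rJ : \rank J = (2 + (n - 3))%N.
  rewrite mxrank_disjoint_sum ?mxrank_compl ?HV2 ?rA //.
  apply/eqP; rewrite -submx0 -(capmx_compl A); apply: capmxS => //.
  exact: addsmxSl.
have rI : \rank I = 1%N.
  rewrite mxrank_gen rank_rV; case: eqP z0V => // ->; by rewrite sub0mx.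
have full : row_full (I + J)%MS.
  rewrite -sub1mx; apply: submx_trans (_ : (A + A^C <= _)%MS).
    by rewrite sub1mx addsmx_compl_full.
  rewrite addsmx_sub; apply/andP; split; last by apply: submx_trans (addsmxSr _ _) (addsmxSr _ _).
  rewrite addsmx_sub; apply/andP; split.
    by apply: submx_trans VJ (addsmxSr _ _).
  by apply: submx_trans z0I (addsmxSl _ _).
exists I, J; split.
- apply: brmx_subP => i j; have [c ->] := rowI j.
  by rewrite brZr brC Hz oppr0 scaler0 sub0mx.
- by apply: brmx_subP => i j; apply: submx_trans (brV _ _) VJ.
- apply/eqP => I0; move: z0I; rewrite I0 submx0 => /eqP z00.
  by move: z0V; rewrite z00 sub0mx.
- apply/eqP; rewrite -submx0; apply: brmx_subP => i j.
  have [c ->] := rowI i; have [d ->] := rowI j.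
  by rewrite brZl brZr Hz !scaler0 sub0mx.
split.
  rewrite -mxrank_eq0; have := mxrank_sum_cap I J.
  move: full; rewrite /row_full => /eqP ->; rewrite rI rJ => H.
  apply/eqP; lia.
by apply/andP; split; [exact: submx1 | rewrite sub1mx].
Qed.

Lemma frame : exists e1 z : 'rV_n, [/\ (e1 <= V)%MS, e1 != 0 &
  (forall x, (br x e1 <= e1)%MS)] /\ [/\ (z <= V)%MS, ~~ (z <= e1)%MS & (V <= e1 + z)%MS].
Proof.
have [e1 [e1V e10 He1]] := common_eigen.
have [z /andP [zV ze1]] : exists v : 'rV_n, (v <= V)%MS && ~~ (v <= e1)%MS.
  by apply: exists_notin; rewrite HV2 rank_rV; case: (e1 != 0).
by exists e1, z; split; split => //; apply: basis2.
Qed.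

Hypothesis Hpure : lie_pure br.

Lemma notriv k : ~~ (k <= V)%MS -> ~ (forall v, (v <= V)%MS -> br k v = 0).
Proof.
move=> kV Hk.
have [e1 [z [[e1V e10 He1] [zV ze1 Vez]]]] := frame.
have [y0 [H1 H2]] := exists_y0 e10 He1 zV ze1 Vez.
have [z0 [z0V Hz0]] := central_of e1V e10 He1 zV ze1 Vez H1 H2 kV Hk.
exact: (not_pure z0V Hz0).
Qed.

Lemma cyclic_vec a : ~ scal a -> exists u, (u <= V)%MS /\ ~~ (br a u <= u)%MS.
Proof.
move=> nsc; apply: NNPP => H.
have H0 : forall u, (u <= V)%MS -> (br a u <= u)%MS.
  by move=> u uV; apply: NNPP => nu; apply: H; exists u; split => //; apply/negP.
have [u1 [u2 [u1V u2V u10 u21 Vu]]] := basisV.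
have /sub_rVP [m1 E1] := H0 _ u1V.
have /sub_rVP [m2 E2] := H0 _ u2V.
have /sub_rVP [m3 E3] := H0 _ (lin_sub 1 1 u1V u2V).
move: E3; rewrite !scale1r brDr E1 E2 scalerDr => /(uniq2 u10 u21) [e1 e2].
apply: nsc; exists m3; apply: (lin_ext Vu).
  by rewrite E1 e1.
by rewrite E2 e2.
Qed.

Lemma centr a x : ~ scal a -> exists al be, forall v, (v <= V)%MS ->
  br x v = al *: v + be *: br a v.
Proof.
move=> /cyclic_vec [u [uV nu]].
have u0 : u != 0 by apply: contraNneq nu => ->; rewrite br0r sub0mx.
have Vu : (V <= u + br a u)%MS by apply: basis2 => //; apply: brV.
have [al [be Hu]] := span2 (submx_trans (brV x u) Vu).
exists al, be => v /(submx_trans)/(_ Vu) /span2 [c [d ->]].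
rewrite !brDr !brZr Hu commV // Hu brDr !brZr.
by apply/rowP => i; rewrite !mxE; ring.
Qed.

Definition concl4 :=
  (exists x1 x2 x3 x4,
     is_basis [:: x1; x2; x3; x4] /\
     (br x1 x2 = x2 /\ br x1 x3 = 0 /\ br x1 x4 = 0 /\ br x2 x3 = 0 /\
      br x2 x4 = 0 /\ br x3 x4 = x4))
  \/
  (exists x1 x2 x3 x4,
     is_basis [:: x1; x2; x3; x4] /\
     (br x1 x2 = 0 /\ br x1 x3 = 0 /\ br x1 x4 = x3 /\ br x2 x3 = x3 /\
      br x2 x4 = x4 /\ br x3 x4 = 0)).

Definition concl3 :=
  (exists x1 x2 x3,
     is_basis [:: x1; x2; x3] /\
     [/\ br x1 x2 = x2, br x1 x3 = x2 + x3 & br x2 x3 = 0])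
  \/
  (exists (gamma : CC) x1 x2 x3,
     gamma != 0 /\ is_basis [:: x1; x2; x3] /\
     [/\ br x1 x2 = x2, br x1 x3 = gamma *: x3 & br x2 x3 = 0]).


Ltac memb := apply: memM; rewrite !inE ?eqxx ?orbT.

Lemma fullVy m (M : 'M_(m, n)) (e1 z y0 : 'rV_n) : (V <= e1 + z)%MS -> (1%:M <= V + y0)%MS ->
  (e1 <= M)%MS -> (z <= M)%MS -> (y0 <= M)%MS -> (1%:M <= M)%MS.
Proof.
move=> Vez F e1M zM yM; apply: submx_trans F _.
rewrite addsmx_sub yM andbT; apply: submx_trans Vez _.
by rewrite addsmx_sub e1M zM.
Qed.

Lemma case3 (e1 z y0 : 'rV_n) : (e1 <= V)%MS -> e1 != 0 -> (forall x, (br x e1 <= e1)%MS) ->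
  (z <= V)%MS -> ~~ (z <= e1)%MS -> (V <= e1 + z)%MS ->
  br y0 e1 != 0 -> ~~ (br y0 z <= e1)%MS -> n = 3%N -> (1%:M <= V + y0)%MS -> concl3.
Proof.
move=> e1V e10 He1 zV ze1 Vez y0e y0z n3 F.
have /sub_rVP [l Hl] := He1 y0.
have l0 : l != 0 by apply: contraNneq y0e => l0; rewrite Hl l0 scale0r.
have [p [q Hz]] := span2 (submx_trans (brV y0 z) Vez).
have q0 : q != 0.
  apply: contraNneq y0z => q0; rewrite Hz q0 scale0r addr0; exact: scalemx_sub.
have [ql|qln] := eqVneq q l.
  have [p0|pn0] := eqVneq p 0.
    right; exists 1, (l^-1 *: y0), e1, z; split; first exact: oner_neq0.
    split.
      apply: mk_basis; first exact: (esym n3).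
      apply: (fullVy Vez F); try by memb.
      have -> : y0 = l *: (l^-1 *: y0) by rewrite scalerA divff // scale1r.
      by apply: (@scal_subK _ _ _ _ l^-1); rewrite ?invr_eq0 //; memb.
    split.
    - by rewrite brZl Hl scalerA mulVf // scale1r.
    - by rewrite brZl Hz p0 ql scale0r add0r scalerA mulVf // !scale1r.
    - exact: abelV.
  left; exists (l^-1 *: y0), ((p / l) *: e1), z; split.
    apply: mk_basis; first exact: (esym n3).
    apply: (fullVy Vez F); try by memb.
      by apply: (@scal_subK _ _ _ _ (p / l)); rewrite ?mulf_neq0 ?invr_eq0 //; memb.
    by apply: (@scal_subK _ _ _ _ l^-1); rewrite ?invr_eq0 //; memb.
  split.
  - rewrite brZl brZr Hl; apply/rowP => i; rewrite !mxE; field => //.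
  - rewrite brZl Hz ql; apply/rowP => i; rewrite !mxE; field => //.
  - by apply: abelV => //; apply: scalemx_sub.
have qln' : q - l != 0 by rewrite subr_eq0.
set e2 := z + (p / (q - l)) *: e1.
right; exists (q / l), (l^-1 *: y0), e1, e2; split.
  by rewrite mulf_neq0 ?invr_eq0.
split.
  apply: mk_basis; first exact: (esym n3).
  apply: (fullVy Vez F); try by memb.
    apply: (@sub_eq _ _ _ z (1 *: e2 + (- (p / (q - l))) *: e1)).
      by rewrite /e2; apply/rowP => i; rewrite !mxE; ring.
    by apply: lin_sub; memb.
  by apply: (@scal_subK _ _ _ _ l^-1); rewrite ?invr_eq0 //; memb.
split.
- by rewrite brZl Hl scalerA mulVf // scale1r.
- rewrite /e2 brZl brDr brZr Hz Hl; apply/rowP => i; rewrite !mxE; field.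
  by apply/andP.
- by apply: abelV => //; rewrite /e2 -[z]scale1r; apply: lin_sub.
Qed.

Lemma case4 (e1 z a b : 'rV_n) : (e1 <= V)%MS -> e1 != 0 -> (forall x, (br x e1 <= e1)%MS) ->
  (z <= V)%MS -> ~~ (z <= e1)%MS -> (V <= e1 + z)%MS ->
  ~ scal a -> (forall v, (v <= V)%MS -> br b v = v) -> n = 4%N ->
  (1%:M <= V + a + b)%MS -> concl4.
Proof.
move=> e1V e10 He1 zV ze1 Vez nsc Hb n4 F.
have /sub_rVP [mu Hmu] := He1 a.
have [p [q Hz]] := span2 (submx_trans (brV a z) Vez).
have Hbe := Hb _ e1V; have Hbz := Hb _ zV.
set a' := a - mu *: b.
have Ha'e : br a' e1 = 0 by rewrite brBl brZl Hmu Hbe subrr.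
have Ha'z : br a' z = p *: e1 + (q - mu) *: z.
  by rewrite brBl brZl Hz Hbz; apply/rowP => i; rewrite !mxE; ring.
have fullM : forall m (M : 'M_(m, n)), (V <= M)%MS -> (a <= M)%MS -> (b <= M)%MS -> (1%:M <= M)%MS.
  move=> m M VM aM bM; apply: submx_trans F _.
  by rewrite !addsmx_sub VM aM bM.
have [qm|qmn] := eqVneq q mu.
  have pn0 : p != 0.
    apply/eqP => p0; apply: nsc; exists mu; apply: (lin_ext Vez) => //.
    by rewrite Hz qm p0 scale0r add0r.
  set a2 := p^-1 *: a'.
  have Ha2e : br a2 e1 = 0 by rewrite brZl Ha'e scaler0.
  have Ha2z : br a2 z = e1.
    by rewrite brZl Ha'z qm subrr scale0r addr0 scalerA mulVf // scale1r.
  set w := br a2 b.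
  have wV : (w <= V)%MS by apply: brV.
  right; exists (a2 + w), b, e1, z; split.
    apply: mk_basis; first exact: (esym n4).
    set M := (X in (_ <= X)%MS).
    have VM : (V <= M)%MS.
      by apply: submx_trans Vez _; rewrite addsmx_sub; apply/andP; split; memb.
    apply: fullM => //; last by memb.
    have a2M : (a2 <= M)%MS.
      apply: (@sub_eq _ _ _ a2 (1 *: (a2 + w) + (-1) *: w)).
        by rewrite scale1r scaleN1r addrK.
      by apply: lin_sub; [memb | apply: submx_trans VM].
    apply: (@sub_eq _ _ _ a (p *: a2 + mu *: b)).
      rewrite /a2 /a' scalerA divff // scale1r.
      by apply/rowP => i; rewrite !mxE; ring.
    by apply: lin_sub => //; memb.
  do !split.
  - by rewrite brDl (brC w b) (Hb _ wV) subrr.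
  - by rewrite brDl Ha2e (abelV wV e1V) addr0.
  - by rewrite brDl Ha2z (abelV wV zV) addr0.
  - exact: Hbe.
  - exact: Hbz.
  - exact: abelV.
have rn0 : q - mu != 0 by rewrite subr_eq0.
set r := q - mu in rn0 Ha'z.
set e2 := z + (p / r) *: e1.
have e2V : (e2 <= V)%MS by rewrite /e2 -[z]scale1r; apply: lin_sub.
have e2e1 : ~~ (e2 <= e1)%MS.
  apply: contra ze1 => H; apply: (@sub_eq _ _ _ z (1 *: e2 + (- (p / r)) *: e1)).
    by rewrite /e2; apply/rowP => i; rewrite !mxE; ring.
  by apply: lin_sub.
have Vee : (V <= e1 + e2)%MS by apply: basis2.
set a2 := r^-1 *: a'.
have Ha2e : br a2 e1 = 0 by rewrite brZl Ha'e scaler0.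
have Ha2z : br a2 e2 = e2.
  rewrite /e2 brDr brZr Ha2e scaler0 addr0 brZl Ha'z.
  by apply/rowP => i; rewrite !mxE; field.
set c := b - a2.
have Hce : br c e1 = e1 by rewrite brBl Ha2e Hbe subr0.
have Hcz : br c e2 = 0 by rewrite brBl Ha2z (Hb _ e2V) subrr.
have [s [t Hw]] := span2 (submx_trans (brV c a2) Vee).
left; exists (c + t *: e2), e1, (a2 - s *: e1), e2; split.
  apply: mk_basis; first exact: (esym n4).
  set M := (X in (_ <= X)%MS).
  have VM : (V <= M)%MS.
    by apply: submx_trans Vee _; rewrite addsmx_sub; apply/andP; split; memb.
  have a2M : (a2 <= M)%MS.
    apply: (@sub_eq _ _ _ a2 (1 *: (a2 - s *: e1) + s *: e1)).
      by apply/rowP => i; rewrite !mxE; ring.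
    by apply: lin_sub; [memb | apply: submx_trans VM].
  have cM : (c <= M)%MS.
    apply: (@sub_eq _ _ _ c (1 *: (c + t *: e2) + (- t) *: e2)).
      by apply/rowP => i; rewrite !mxE; ring.
    by apply: lin_sub; [memb | apply: submx_trans VM].
  have bM : (b <= M)%MS.
    apply: (@sub_eq _ _ _ b (1 *: c + 1 *: a2)).
      by rewrite /c !scale1r subrK.
    exact: lin_sub.
  apply: fullM => //.
  apply: (@sub_eq _ _ _ a (r *: a2 + mu *: b)).
    rewrite /a2 /a' scalerA divff // scale1r.
    by apply/rowP => i; rewrite !mxE; ring.
  exact: lin_sub.
have ab := abelV.
clearbody c a2.
do !split.
- by rewrite brDl Hce brZl (ab _ _ e2V e1V) scaler0 addr0.
- rewrite brDl !brDr Hw !brZl (brC e2 a2) Ha2z !brNr !brZr Hce (ab _ _ e2V e1V).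
  rewrite scaler0.
  by apply/rowP => i; rewrite !mxE; ring.
- by rewrite brDl Hcz brZl (ab _ _ e2V e2V) scaler0 addr0.
- by rewrite brBr brZr (brC e1 a2) Ha2e (ab _ _ e1V e1V) scaler0 !oppr0 addr0.
- exact: ab.
- by rewrite brBl Ha2z brZl (ab _ _ e1V e2V) scaler0 subr0.
Qed.

Lemma full_of m (A : 'M[CC]_(m, n)) : \rank A = n -> (1%:M <= A)%MS.
Proof. by move=> r; rewrite sub1mx /row_full r. Qed.

Lemma main_cls : concl3 \/ concl4.
Proof.
have [e1 [z [[e1V e10 He1] [zV ze1 Vez]]]] := frame.
have [y0 [y0e y0z]] := exists_y0 e10 He1 zV ze1 Vez.
have y0V : ~~ (y0 <= V)%MS.
  by apply: contra y0e => H; rewrite (abelV H e1V).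
have r3 : \rank (V + y0)%MS = 3%N by rewrite rank_add1 // HV2.
have n3 : (3 <= n)%N by rewrite -r3 rank_leq_col.
have [en3|nn3] := eqVneq n 3%N.
  left; apply: (case3 e1V e10 He1 zV ze1 Vez y0e y0z en3).
  by apply: full_of; rewrite r3 en3.
have n4 : (4 <= n)%N by rewrite ltn_neqAle eq_sym nn3 n3.
have [y1 /andP [_ y1V]] : exists v : 'rV_n, (v <= 1%:M)%MS && ~~ (v <= V + y0)%MS.
  by apply: exists_notin; rewrite mxrank1 r3.
have subV : forall (a b : 'rV_n), (V <= V + a + b)%MS.
  by move=> a b; apply: submx_trans (addsmxSl V a) (addsmxSl _ b).
have suba : forall (a b : 'rV_n), (a <= V + a + b)%MS.
  by move=> a b; apply: submx_trans (addsmxSr V a) (addsmxSl _ b).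
have subb : forall (a b : 'rV_n), (b <= V + a + b)%MS.
  by move=> a b; apply: addsmxSr.
have [a [b [nsa Hb ya yb]]] : exists a b, [/\ ~ scal a, (forall v, (v <= V)%MS -> br b v = v),
    (y0 <= V + a + b)%MS & (y1 <= V + a + b)%MS].
  case: (classic (scal y0)) => [[mu Hmu]|nsy0].
    have mu0 : mu != 0 by apply: contraNneq y0e => mu0; rewrite Hmu // mu0 scale0r.
    case: (classic (scal y1)) => [[al Hal]|nsy1].
      exfalso; apply: (@notriv (mu *: y1 - al *: y0)).
        apply: contra y1V => H.
        apply: (@sub_eq _ _ _ y1 (mu^-1 *: (mu *: y1 - al *: y0) + (mu^-1 * al) *: y0)).
          by apply/rowP => i; rewrite !mxE; field.
        by apply: lin_sub; [apply: submx_trans H (addsmxSl _ _) | apply: addsmxSr].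
      move=> v vV; rewrite brBl !brZl Hmu // Hal // !scalerA mulrC subrr.
      by [].
    exists y1, (mu^-1 *: y0); split => //.
    - by move=> v vV; rewrite brZl Hmu // scalerA mulVf // scale1r.
    - apply: (@sub_eq _ _ _ y0 (mu *: (mu^-1 *: y0))).
        by rewrite scalerA divff // scale1r.
      by apply: scalemx_sub; apply: subb.
  have [al [be Hc]] := centr y1 nsy0.
  set y1' := y1 - be *: y0.
  have Hy1' : forall v, (v <= V)%MS -> br y1' v = al *: v.
    by move=> v vV; rewrite brBl brZl Hc // addrK.
  have y1'V : ~~ (y1' <= V)%MS.
    apply: contra y1V => H.
    apply: (@sub_eq _ _ _ y1 (1 *: y1' + be *: y0)).
      by rewrite scale1r subrK.
    by apply: lin_sub; [apply: submx_trans H (addsmxSl _ _) | apply: addsmxSr].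
  have al0 : al != 0.
    apply/eqP => al0; apply: (notriv y1'V) => v vV.
    by rewrite Hy1' // al0 scale0r.
  exists y0, (al^-1 *: y1'); split => //.
  - by move=> v vV; rewrite brZl Hy1' // scalerA mulVf // scale1r.
  - apply: (@sub_eq _ _ _ y1 (al *: (al^-1 *: y1') + be *: y0)).
      by rewrite scalerA divff // scale1r subrK.
    by apply: lin_sub; [apply: subb | apply: suba].
have sub01 : (V + y0 + y1 <= V + a + b)%MS.
  by rewrite !addsmx_sub subV ya yb.
have r4 : \rank (V + y0 + y1)%MS = 4%N by rewrite rank_add1 // r3.
have r4' : (4 <= \rank (V + a + b)%MS)%N by rewrite -r4 mxrankS.
have [en4|nn4] := eqVneq n 4%N.
  right; apply: (case4 e1V e10 He1 zV ze1 Vez nsa Hb en4).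
  apply: full_of; apply/eqP; rewrite eqn_leq rank_leq_col /=.
  by apply: leq_trans r4'; rewrite en4.
have n5 : (5 <= n)%N by rewrite ltn_neqAle eq_sym nn4 n4.
have r4'' : (\rank (V + a + b)%MS <= 4)%N.
  have [H1 _] := mxrank_adds_leqif (V + a)%MS b.
  have [H2 _] := mxrank_adds_leqif V a.
  rewrite HV2 in H2.
  exact: (leq_trans H1 (leq_add (leq_trans H2 (leq_add (leqnn 2) (rank_leq_row a))) (rank_leq_row b))).
have [y2 /andP [_ y2V]] : exists v : 'rV_n, (v <= 1%:M)%MS && ~~ (v <= V + a + b)%MS.
  by apply: exists_notin; rewrite mxrank1; apply: leq_ltn_trans r4'' n5.
have [al [be Hc]] := centr y2 nsa.
exfalso; apply: (@notriv (y2 - be *: a - al *: b)).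
  apply: contra y2V => H.
  apply: (@sub_eq _ _ _ y2 (1 *: (y2 - be *: a - al *: b) + 1 *: (be *: a + al *: b))).
    by apply/rowP => i; rewrite !mxE; ring.
  apply: lin_sub; first exact: submx_trans H (subV a b).
  by apply: lin_sub; [apply: suba | apply: subb].
move=> v vV; rewrite !brBl !brZl Hc // Hb //.
by apply/rowP => i; rewrite !mxE; ring.
Qed.

End Lie.

Unset Implicit Arguments.

Theorem theorem3p9 (n : nat) (br : 'rV[CC]_n -> 'rV[CC]_n -> 'rV[CC]_n) :
  is_lie_bracket br ->
  lie_pure br -> ~ lie_nilpotent br -> lie_solvable br ->
  has_breadth br 2 ->
  \rank (lcs br 1) = 2%N ->
  (forall k, (2 <= k)%N -> \rank (lcs br k) = 2%N) ->
  (exists x1 x2 x3 x4 x5,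
     is_basis [:: x1; x2; x3; x4; x5] /\
     (br x1 x2 = 0 /\ br x1 x3 = 0 /\ br x1 x4 = 0 /\ br x1 x5 = x4 /\ br x2 x3 = 0 /\
      br x2 x4 = x4 /\ br x2 x5 = 0 /\ br x3 x4 = 0 /\ br x3 x5 = x5 /\ br x4 x5 = 0))
  \/
  (exists x1 x2 x3 x4,
     is_basis [:: x1; x2; x3; x4] /\
     (br x1 x2 = x2 /\ br x1 x3 = 0 /\ br x1 x4 = 0 /\ br x2 x3 = 0 /\
      br x2 x4 = 0 /\ br x3 x4 = x4))
  \/
  (exists x1 x2 x3 x4,
     is_basis [:: x1; x2; x3; x4] /\
     (br x1 x2 = 0 /\ br x1 x3 = 0 /\ br x1 x4 = x3 /\ br x2 x3 = x3 /\
      br x2 x4 = x4 /\ br x3 x4 = 0))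
  \/
  (exists x1 x2 x3,
     is_basis [:: x1; x2; x3] /\
     [/\ br x1 x2 = x2, br x1 x3 = x2 + x3 & br x2 x3 = 0])
  \/
  (exists (gamma : CC) x1 x2 x3,
     gamma != 0 /\ is_basis [:: x1; x2; x3] /\
     [/\ br x1 x2 = x2, br x1 x3 = gamma *: x3 & br x2 x3 = 0]).
Proof.
move=> Hbr Hp _ _ _ H1 Hk.
have H2 := Hk 2%N (leqnn 2).
case: (@main_cls n br Hbr H1 H2 Hp) => [[c|c]|[c|c]].
- by right; right; right; left.
- by right; right; right; right.
- by right; left.
- by right; right; left.
Qed.
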